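(* Let $f\colon K\to R$ be a homomorphism of (nonunital) rings, and assume that $KR\subset RK$ in $R$ (for example, $RK=R$). Then (a) any right $R$-module that is t-unital as a right $K$-module is also t-unital as a right $R$-module; (b) any left $R$-module that is c-unital as a left $K$-module is also c-unital as a left $R$-module. In particular, if the ring $R$ is commutative, then (a) and (b) hold for any homomorphism $f$.
   Context: Rings are associative, not necessarily unital; modules are not assumed unital. $KR$ denotes the additive subgroup of $R$ generated by products $f(k)r$, and $RK$ the subgroup generated by $rf(k)$, for $k\in K$, $r\in R$; $R$-modules are $K$-modules via $f$. A right module $N$ over a ring $S$ is t-unital if $N\otimes_S S\to N$, $n\otimes s\mapsto ns$, is an isomorphism; a left $S$-module $P$ is c-unital if $P\to\mathrm{Hom}_S(S,P)$, $p\mapsto(s\mapsto sp)$, is an isomorphism (with $\mathrm{Hom}_S$ denoting left $S$-module homomorphisms). *)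

(* Defs.v *)
From HB Require Import structures.
From mathcomp Require Import all_boot all_algebra.
Set Implicit Arguments. Unset Strict Implicit. Unset Printing Implicit Defensive.
Import GRing.Theory.
Local Open Scope ring_scope.

Definition nuring_axioms (R : zmodType) (mul : R -> R -> R) : Prop :=
  [/\ associative mul,
      (forall x y z, mul (x + y) z = mul x z + mul y z) &
      (forall x y z, mul x (y + z) = mul x y + mul x z)].

Definition nuring_hom (K R : zmodType) (mulK : K -> K -> K) (mulR : R -> R -> R)
  (f : K -> R) : Prop :=
  (forall x y, f (x + y) = f x + f y) /\ (forall x y, f (mulK x y) = mulR (f x) (f y)).

Definition rmod_axioms (S : zmodType) (mulS : S -> S -> S) (N : zmodType)
  (act : N -> S -> N) : Prop :=
  [/\ (forall n s s', act (act n s) s' = act n (mulS s s')),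
      (forall n n' s, act (n + n') s = act n s + act n' s) &
      (forall n s s', act n (s + s') = act n s + act n s')].

Definition lmod_axioms (S : zmodType) (mulS : S -> S -> S) (P : zmodType)
  (act : S -> P -> P) : Prop :=
  [/\ (forall s s' p, act s (act s' p) = act (mulS s s') p),
      (forall s p p', act s (p + p') = act s p + act s p') &
      (forall s s' p, act (s + s') p = act s p + act s' p)].

Definition balanced (S : zmodType) (mulS : S -> S -> S) (N : zmodType)
  (act : N -> S -> N) (A : zmodType) (b : N -> S -> A) : Prop :=
  [/\ (forall n n' s, b (n + n') s = b n s + b n' s),
      (forall n s s', b n (s + s') = b n s + b n s') &
      (forall n s s', b (act n s) s' = b n (mulS s s'))].

(* t-unital: the map N (x)_S S -> N, n (x) s |-> ns, is an isomorphism, i.e.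
   (N, act) itself satisfies the universal property of N (x)_S S. *)
Definition t_unital (S : zmodType) (mulS : S -> S -> S) (N : zmodType)
  (act : N -> S -> N) : Prop :=
  forall (A : zmodType) (b : N -> S -> A), balanced mulS act b ->
    exists g : N -> A,
      ((forall x y, g (x + y) = g x + g y) /\ (forall n s, g (act n s) = b n s)) /\
      (forall g' : N -> A,
         (forall x y, g' (x + y) = g' x + g' y) ->
         (forall n s, g' (act n s) = b n s) -> g =1 g').

Definition lhom (S : zmodType) (mulS : S -> S -> S) (P : zmodType)
  (act : S -> P -> P) (h : S -> P) : Prop :=
  (forall x y, h (x + y) = h x + h y) /\ (forall s s', h (mulS s s') = act s (h s')).

(* c-unital: p |-> (s |-> sp) is a bijection P -> Hom_S(S, P). *)
Definition c_unital (S : zmodType) (mulS : S -> S -> S) (P : zmodType)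
  (act : S -> P -> P) : Prop :=
  (forall p p', (forall s, act s p = act s p') -> p = p') /\
  (forall h : S -> P, lhom mulS act h -> exists p, forall s, h s = act s p).

Definition addgen (R : zmodType) (X : R -> Prop) (x : R) : Prop :=
  forall Q : R -> Prop, Q 0 -> (forall a b, Q a -> Q b -> Q (a - b)) ->
    (forall a, X a -> Q a) -> Q x.

Definition KR (K R : zmodType) (mulR : R -> R -> R) (f : K -> R) : R -> Prop :=
  addgen (fun x => exists k r, x = mulR (f k) r).
Definition RK (K R : zmodType) (mulR : R -> R -> R) (f : K -> R) : R -> Prop :=
  addgen (fun x => exists k r, x = mulR r (f k)).

(* Main.v *)
From HB Require Import structures.
Require Import Defs.
From mathcomp Require Import all_boot all_algebra.
From Stdlib Require Import ClassicalEpsilon FunctionalExtensionality PropExtensionality.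
Set Implicit Arguments. Unset Strict Implicit. Unset Printing Implicit Defensive.
Import GRing.Theory.
Local Open Scope ring_scope.

Lemma addgen0 (N : zmodType) (X : N -> Prop) : addgen X 0.
Proof. by move=> Q. Qed.
Lemma addgenB (N : zmodType) (X : N -> Prop) a b :
  addgen X a -> addgen X b -> addgen X (a - b).
Proof. by move=> ha hb Q h0 hB hX; apply: (hB); [exact: (ha Q h0 hB hX)|exact: (hb Q h0 hB hX)]. Qed.
Lemma addgenX (N : zmodType) (X : N -> Prop) a : X a -> addgen X a.
Proof. by move=> ha Q h0 hB hX; apply: hX. Qed.
Lemma addgenN (N : zmodType) (X : N -> Prop) a : addgen X a -> addgen X (- a).
Proof. by move=> ha; rewrite -sub0r; apply: addgenB; [apply: addgen0|exact: ha]. Qed.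
Lemma addgenD (N : zmodType) (X : N -> Prop) a b :
  addgen X a -> addgen X b -> addgen X (a + b).
Proof. by move=> ha hb; rewrite -[b]opprK; apply: addgenB => //; apply: addgenN. Qed.

Definition canon (N : zmodType) (X : N -> Prop) (x : N) : N :=
  epsilon (inhabits 0) (fun y => addgen X (y - x)).

Lemma canon_spec (N : zmodType) (X : N -> Prop) x : addgen X (canon X x - x).
Proof. apply: (epsilon_spec (inhabits 0) (fun y => addgen X (y - x))).
by exists x; rewrite subrr; apply: addgen0. Qed.

Lemma canon_eq (N : zmodType) (X : N -> Prop) x y : addgen X (x - y) -> canon X x = canon X y.
Proof.
move=> h; rewrite /canon; congr epsilon; apply: functional_extensionality => z.
apply: propositional_extensionality; split => hz.
- have -> : z - y = (z - x) + (x - y) by rewrite addrA subrK.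
  exact: addgenD.
- have -> : z - x = (z - y) - (x - y) by rewrite opprB addrA subrK.
  exact: addgenB.
Qed.

Lemma canonK (N : zmodType) (X : N -> Prop) x : canon X (canon X x) = canon X x.
Proof. apply: canon_eq; exact: canon_spec. Qed.

Definition Quot (N : zmodType) (X : N -> Prop) := {x : N | canon X x == x}.
HB.instance Definition _ (N : zmodType) (X : N -> Prop) := [isSub for (@sval N (fun x => canon X x == x) : Quot X -> N)].
HB.instance Definition _ (N : zmodType) (X : N -> Prop) := [Choice of Quot X by <:].

Definition mkq (N : zmodType) (X : N -> Prop) (x : N) : Quot X :=
  exist (fun x => canon X x == x) (canon X x) (introT eqP (canonK X x)).

Lemma mkq_eq (N : zmodType) (X : N -> Prop) x y : addgen X (x - y) -> mkq X x = mkq X y.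
Proof. by move=> h; apply: val_inj => /=; apply: canon_eq. Qed.

Lemma mkq_val (N : zmodType) (X : N -> Prop) (a : Quot X) : mkq X (val a) = a.
Proof. by apply: val_inj => /=; case: a => a /= /eqP. Qed.

Lemma mkq_inv (N : zmodType) (X : N -> Prop) x y : mkq X x = mkq X y -> addgen X (x - y).
Proof.
move=> /(congr1 val) /= e.
have -> : x - y = (canon X y - y) - (canon X x - x).
  by rewrite e opprB [RHS]addrC addrA subrK.
by apply: addgenB; apply: canon_spec.
Qed.

Definition qadd (N : zmodType) (X : N -> Prop) (a b : Quot X) := mkq X (val a + val b).
Definition qopp (N : zmodType) (X : N -> Prop) (a : Quot X) := mkq X (- val a).
Definition qzero (N : zmodType) (X : N -> Prop) := mkq X 0.

Lemma valmk (N : zmodType) (X : N -> Prop) x : addgen X (val (mkq X x) - x).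
Proof. exact: canon_spec. Qed.

Lemma qaddE (N : zmodType) (X : N -> Prop) x y : qadd (mkq X x) (mkq X y) = mkq X (x + y).
Proof.
apply: mkq_eq.
have -> : val (mkq X x) + val (mkq X y) - (x + y) = (val (mkq X x) - x) + (val (mkq X y) - y).
  by rewrite opprD addrACA.
by apply: addgenD; apply: valmk.
Qed.

Lemma qoppE (N : zmodType) (X : N -> Prop) x : qopp (mkq X x) = mkq X (- x).
Proof.
apply: mkq_eq; rewrite -opprD; apply: addgenN; exact: valmk.
Qed.

Lemma qaddA (N : zmodType) (X : N -> Prop) : associative (@qadd N X).
Proof.
move=> a b c; rewrite -[a]mkq_val -[b]mkq_val -[c]mkq_val !qaddE; by rewrite addrA.
Qed.
Lemma qaddC (N : zmodType) (X : N -> Prop) : commutative (@qadd N X).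
Proof. by move=> a b; rewrite -[a]mkq_val -[b]mkq_val !qaddE addrC. Qed.
Lemma qadd0 (N : zmodType) (X : N -> Prop) : left_id (qzero X) (@qadd N X).
Proof. by move=> a; rewrite -[a]mkq_val /qzero qaddE add0r. Qed.
Lemma qaddN (N : zmodType) (X : N -> Prop) : left_inverse (qzero X) (@qopp N X) (@qadd N X).
Proof. by move=> a; rewrite -[a]mkq_val qoppE qaddE addNr. Qed.

HB.instance Definition _ (N : zmodType) (X : N -> Prop) :=
  GRing.isZmodule.Build (Quot X) (@qaddA N X) (@qaddC N X) (@qadd0 N X) (@qaddN N X).

Lemma mkqD (N : zmodType) (X : N -> Prop) x y : mkq X (x + y) = mkq X x + mkq X y.
Proof. by rewrite -qaddE. Qed.

Lemma mkq0 (N : zmodType) (X : N -> Prop) x : mkq X x = 0 -> addgen X x.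
Proof. by move=> h; have := @mkq_inv N X x 0; rewrite subr0; apply; rewrite h. Qed.

Lemma mkqX (N : zmodType) (X : N -> Prop) x : X x -> mkq X x = 0.
Proof. by move=> h; apply: (@mkq_eq N X x 0); rewrite subr0; apply: addgenX. Qed.

Lemma hom0 (A B : zmodType) (h : A -> B) : (forall x y, h (x + y) = h x + h y) -> h 0 = 0.
Proof. move=> hD; have e : h 0 + h 0 = h 0 + 0 by rewrite -hD !addr0. exact: addrI e. Qed.

Lemma homB (A B : zmodType) (h : A -> B) : (forall x y, h (x + y) = h x + h y) ->
  forall x y, h (x - y) = h x - h y.
Proof.
move=> hD x y; rewrite hD; congr (_ + _).
apply/eqP; rewrite -subr_eq0 opprK -hD addNr; apply/eqP; exact: hom0.
Qed.

Theorem proposition9p6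
  (K R : zmodType) (mulK : K -> K -> K) (mulR : R -> R -> R)
  (hK : nuring_axioms mulK) (hR : nuring_axioms mulR)
  (f : K -> R) (hf : nuring_hom mulK mulR f)
  (hKR : (forall x, KR mulR f x -> RK mulR f x) \/
         (forall x y : R, mulR x y = mulR y x)) :
  (forall (N : zmodType) (act : N -> R -> N), rmod_axioms mulR act ->
     t_unital mulK (fun n k => act n (f k)) -> t_unital mulR act) /\
  (forall (P : zmodType) (act : R -> P -> P), lmod_axioms mulR act ->
     c_unital mulK (fun k p => act (f k) p) -> c_unital mulR act).
Proof.
case: hf => fD fM.
have hKR' : forall x, KR mulR f x -> RK mulR f x.
  case: hKR => [//|hC] x hx; apply: (hx (RK mulR f)).
  - exact: addgen0.
  - by move=> a c; apply: addgenB.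
  - move=> a [k [r ->]]; rewrite hC; apply: addgenX; by exists k, r.
split.
- move=> N act [aA aD1 aD2] tK A b [bD1 bD2 bB].
  have bal : balanced mulK (fun n k => act n (f k)) (fun n k => b n (f k)).
    split.
    + by move=> n n' s; rewrite bD1.
    + by move=> n s s'; rewrite fD bD2.
    + by move=> n s s'; rewrite bB fM.
  have [g [[gD gb] guniq]] := tK A _ bal.
  pose X := fun x : N => exists n k, x = act n (f k).
  have span : forall x, addgen X x.
    have bal0 : balanced mulK (fun n k => act n (f k)) (fun (_ : N) (_ : K) => (0 : Quot X)).
      by split => *; rewrite ?addr0.
    have [g0 [_ u]] := tK _ _ bal0.
    move=> x; apply: mkq0.
    have e1 := u (mkq X) (@mkqD N X) (fun n k => mkqX (ex_intro _ n (ex_intro _ k erefl))).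
    have e2 := u (fun _ => 0) (fun _ _ => esym (addr0 0)) (fun _ _ => erefl).
    by rewrite -e1 e2.
  exists g; split; last first.
    by move=> g' g'D g'b; apply: guniq => // n k; apply: g'b.
  split => // n r.
  have aDl : forall x y, act (x + y) r = act x r + act y r by move=> *; apply: aD1.
  apply: (span n (fun n => g (act n r) = b n r)).
  + by rewrite (hom0 aDl) (hom0 gD) (hom0 (fun x y => bD1 x y r)).
  + by move=> a c ea ec; rewrite (homB aDl) (homB gD) (homB (fun x y => bD1 x y r)) ea ec.
  + move=> _ [n' [k ->]]; rewrite aA bB.
    have hx : RK mulR f (mulR (f k) r) by apply: hKR'; apply: addgenX; exists k, r.
    have aDr : forall x y, act n' (x + y) = act n' x + act n' y by move=> *; apply: aD2.
    apply: (hx (fun x => g (act n' x) = b n' x)).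
    * by rewrite (hom0 aDr) (hom0 gD) (hom0 (bD2 n')).
    * by move=> a c ea ec; rewrite (homB aDr) (homB gD) (homB (bD2 n')) ea ec.
    * by move=> _ [k' [r' ->]]; rewrite -aA gb bB.
- move=> P act [aA aD1 aD2] [inj surj]; split.
  + by move=> p p' h; apply: inj => k; apply: h.
  + move=> h [hD hM].
    have hl : lhom mulK (fun k p => act (f k) p) (fun k => h (f k)).
      by split => *; rewrite ?fD ?hD ?fM ?hM.
    have [p hp] := surj _ hl.
    exists p => r; apply: inj => k.
    rewrite -hM aA.
    have hx : RK mulR f (mulR (f k) r) by apply: hKR'; apply: addgenX; exists k, r.
    have aDl : forall x y, act (x + y) p = act x p + act y p by move=> *; apply: aD2.
    apply: (hx (fun x => h x = act x p)).
    * by rewrite (hom0 aDl) (hom0 hD).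
    * by move=> a c ea ec; rewrite (homB aDl) (homB hD) ea ec.
    * by move=> _ [k' [r' ->]]; rewrite hM hp aA.
Qed.
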